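(* In the setting of the context, let $\bm s,\bm s'\in\mathcal S$ be starting magnetizations with $\bm s\ge\bm s'$ entrywise. Then for every $t\ge0$, entrywise, \[ \mathbf 0\le\big(\mathbb E_{\bm s}S^{(i)}_t-\mathbb E_{\bm s'}S^{(i)}_t\big)_{i=1}^m\le\mathbf Q_n^t(\bm s-\bm s'), \] where $\mathbb E_{\bm s}$ denotes expectation for the magnetization chain started at $\bm s$.
   Context: Fix $m\ge1$, proportions $p_1,\dots,p_m>0$ with $\sum_ip_i=1$, a symmetric matrix $\mathbf K=(k_{ij})$ with all $k_{ij}>0$, and $\beta\ge0$; $n$ is a positive integer with $np_i\in\mathbb N$. The vertex set $V=\{1,\dots,n\}$ is partitioned into blocks $G_1,\dots,G_m$ with $|G_i|=np_i$; for $v\in G_i,w\in G_j$ put $K(v,w)=k_{ij}/n$. The Glauber dynamics $(\sigma_t)$ on $\Omega=\{-1,+1\}^V$ picks at each step a uniform random vertex $v$ and sets its spin to $\pm1$ with probability $\frac{1\pm\tanh(\beta S^v)}2$, $S^v=\sum_{w\ne v}K(v,w)\sigma(w)$. The magnetization chain is $\bm S_t=(S_t^{(1)},\dots,S_t^{(m)})$ with $S_t^{(i)}=\frac1n\sum_{v\in G_i}\sigma_t(v)$; it is a Markov chain on $\mathcal S=\prod_i\{-p_i,-p_i+2/n,\dots,p_i\}$. Let $\mathbf B=(p_ik_{ij})$ and $\mathbf Q_n=(1-\frac1n)\mathbf I_m+\frac\beta n\mathbf B$. *)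

(* Defs.v *)
From mathcomp Require Import all_boot all_order all_algebra.
From mathcomp Require Import reals sequences exp.
Set Implicit Arguments. Unset Strict Implicit. Unset Printing Implicit Defensive.
Import Order.TTheory GRing.Theory Num.Theory.
Local Open Scope ring_scope.

Definition tanhR {R : realType} (x : R) : R :=
  (expR x - expR (- x)) / (expR x + expR (- x)).

(* spin configurations on V = 'I_n : true = +1, false = -1 *)
Definition config (n : nat) := {ffun 'I_n -> bool}.
Definition spin {R : realType} (b : bool) : R := if b then 1 else -1.

Definition upd n (sigma : config n) (v : 'I_n) (b : bool) : config n :=
  [ffun w => if w == v then b else sigma w].

(* interaction K(v,w) = k_{ij}/n for v in G_i, w in G_j; blk v = block of v *)
Definition Kint {R : realType} m n (k : 'M[R]_m) (blk : 'I_n -> 'I_m)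
  (v w : 'I_n) : R := k (blk v) (blk w) / n%:R.

Definition locfield {R : realType} m n (k : 'M[R]_m) (blk : 'I_n -> 'I_m)
  (sigma : config n) (v : 'I_n) : R :=
  \sum_(w < n | w != v) Kint k blk v w * spin (sigma w).

Definition glauberP {R : realType} m n (k : 'M[R]_m) (blk : 'I_n -> 'I_m)
  (beta : R) (sigma tau : config n) : R :=
  n%:R^-1 * \sum_(v < n)
    ( (tau == upd sigma v true)%:R * ((1 + tanhR (beta * locfield k blk sigma v)) / 2)
    + (tau == upd sigma v false)%:R * ((1 - tanhR (beta * locfield k blk sigma v)) / 2)).

Fixpoint glauberPt {R : realType} m n (k : 'M[R]_m) (blk : 'I_n -> 'I_m)
  (beta : R) (t : nat) (sigma tau : config n) : R :=
  match t with
  | 0 => (sigma == tau)%:R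
  | t'.+1 => \sum_(rho : config n)
               glauberPt k blk beta t' sigma rho * glauberP k blk beta rho tau
  end.

Definition magn {R : realType} m n (blk : 'I_n -> 'I_m) (sigma : config n)
  (i : 'I_m) : R :=
  n%:R^-1 * \sum_(v < n | blk v == i) spin (sigma v).

Definition expMagn {R : realType} m n (k : 'M[R]_m) (blk : 'I_n -> 'I_m)
  (beta : R) (sigma : config n) (t : nat) (i : 'I_m) : R :=
  \sum_(tau : config n) glauberPt k blk beta t sigma tau * magn blk tau i.

Definition Qn {R : realType} m (n : nat) (p : 'I_m -> R) (k : 'M[R]_m)
  (beta : R) : 'M[R]_m :=
  \matrix_(i, j) ((i == j)%:R * (1 - n%:R^-1) + beta / n%:R * (p i * k i j)).

Definition mxpow {R : realType} m (A : 'M[R]_m) (t : nat) : 'M[R]_m :=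
  iter t (fun M => A *m M) 1%:M.

(* Main.v *)
Require Import Defs.
From mathcomp Require Import all_boot all_order all_algebra.
From mathcomp Require Import reals sequences exp.
From mathcomp Require Import boolp classical_sets functions topology normedtype derive.
From mathcomp Require Import fingroup perm.
From mathcomp Require Import ring lra.
Import Order.TTheory GRing.Theory Num.Theory.
Import numFieldNormedType.Exports.
Set Implicit Arguments. Unset Strict Implicit. Unset Printing Implicit Defensive.
Local Open Scope ring_scope.

Section Tanh.
Variable R : realType.

Lemma jfun_ge0 (z : R) : 0 <= z -> 0 <= (2 + z) - (2 - z) * expR z.
Proof.
move=> z0.
pose j : R -> R := ((cst 2 + id) - (cst 2 - id) * expR)%R.
have dj_ok : forall t : R, is_derive t 1 j (1 + (expR t) * (t - 1)).
  move=> t.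
  apply: is_derive_eq.
  rewrite /GRing.scale /= /cst /=; change (0 + 1 - ((2 - t) * expR t + expR t * (0 - 1)) = 1 + expR t * (t - 1)); ring.
have dj_d : forall t : R, derivable j t 1 by move=> t; case: (dj_ok t).
have [c _ hc] := MVT_segment z0 (fun x _ => dj_ok x)
   (derivable_within_continuous (i := `[0, z]%R) (fun x _ => dj_d x)).
have -> : 2 + z - (2 - z) * expR z = j z by [].
have j0 : j 0 = 0.
  change (2 + 0 - (2 - 0) * expR 0 = 0 :> R); rewrite expR0; ring.
have : 0 <= j z - j 0.
  rewrite hc; apply: mulr_ge0; last by lra.
  have h1 := expR_ge1Dx (- c).
  rewrite expRN in h1.
  have ec := expR_gt0 c.
  have : (1 - c) * expR c <= 1.
    by have := ler_wpM2r (ltW ec) h1; rewrite mulVf ?gt_eqF.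
  lra.
by rewrite j0 subr0.
Qed.

Lemma tanhE (x : R) : tanhR x = (expR x ^+ 2 - 1) / (expR x ^+ 2 + 1).
Proof.
rewrite /tanhR expRN; have ex := expR_gt0 x.
have h1 : expR x != 0 by rewrite gt_eqF.
have h2 : expR x ^+ 2 + 1 != 0 by rewrite gt_eqF // addr_gt0 // exprn_gt0.
have h3 : expR x + (expR x)^-1 != 0 by rewrite gt_eqF // addr_gt0 // invr_gt0.
by field; rewrite h1 h2.
Qed.

Lemma tanh_bounds (x : R) : -1 <= tanhR x <= 1.
Proof.
rewrite tanhE; set X := expR x ^+ 2.
have X0 : 0 <= X by rewrite /X exprn_ge0 // ltW // expR_gt0.
have d0 : 0 < X + 1 by lra.
apply/andP; split; [rewrite ler_pdivlMr // | rewrite ler_pdivrMr //]; lra.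
Qed.

Lemma tanh_mono (x y : R) : y <= x -> tanhR y <= tanhR x.
Proof.
move=> yx; rewrite !tanhE.
have ey := expR_gt0 y; have ex := expR_gt0 x.
have exy : expR y <= expR x by rewrite ler_expR.
set X := expR x in ex exy *; set Y := expR y in ey exy *.
have hX : Y ^+ 2 <= X ^+ 2 by rewrite ler_pXn2r // ?nnegrE ltW.
have dx : 0 < X ^+ 2 + 1 by rewrite addr_gt0 // exprn_gt0.
have dy : 0 < Y ^+ 2 + 1 by rewrite addr_gt0 // exprn_gt0.
rewrite ler_pdivrMr // mulrAC ler_pdivlMr //.
nra.
Qed.

Lemma tanh_lip (x y : R) : y <= x -> tanhR x - tanhR y <= x - y.
Proof.
move=> yx; have u0 : 0 <= x - y by lra.
have J := @jfun_ge0 (x - y) u0.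
have E : expR (x - y) * expR y = expR x by rewrite -expRD subrK.
rewrite !tanhE.
have ey := expR_gt0 y; have ex := expR_gt0 x.
have exy : expR y <= expR x by rewrite ler_expR.
set X := expR x in ex exy E *; set Y := expR y in ey exy E *.
set u := (x - y) in u0 J E *.
set e := expR u in J E.
have K : 2 * (X - Y) <= u * (X + Y).
  have := ler_wpM2r (ltW ey) J; rewrite mul0r => H. rewrite -E. nra.
have dx : 0 < X ^+ 2 + 1 by rewrite addr_gt0 // exprn_gt0.
have dy : 0 < Y ^+ 2 + 1 by rewrite addr_gt0 // exprn_gt0.
have -> : (X ^+ 2 - 1) / (X ^+ 2 + 1) - (Y ^+ 2 - 1) / (Y ^+ 2 + 1)
   = 2 * (X ^+ 2 - Y ^+ 2) / ((X ^+ 2 + 1) * (Y ^+ 2 + 1)).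
  by field; rewrite !gt_eqF.
rewrite ler_pdivrMr ?mulr_gt0 //.
have L : (X + Y) ^+ 2 <= (X ^+ 2 + 1) * (Y ^+ 2 + 1).
  have : 0 <= (X * Y - 1) ^+ 2 by rewrite sqr_ge0.
  lra.
have : 2 * (X ^+ 2 - Y ^+ 2) <= u * (X + Y) ^+ 2.
  have -> : 2 * (X ^+ 2 - Y ^+ 2) = (2 * (X - Y)) * (X + Y) by ring.
  rewrite (expr2 (X + Y)) mulrA; apply: ler_wpM2r => //; lra.
have := ler_wpM2l u0 L. lra.
Qed.
End Tanh.

Lemma sum_delta (R : realType) (T : finType) (x : T) (G : T -> R) :
  \sum_(t : T) (t == x)%:R * G t = G x.
Proof.
rewrite (bigD1 x) //= eqxx mul1r big1 ?addr0 // => t /negbTE ->.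
by rewrite mul0r.
Qed.

Lemma sum_delta' (R : realType) (T : finType) (x : T) (G : T -> R) :
  \sum_(t : T) (x == t)%:R * G t = G x.
Proof. by rewrite -(sum_delta x); apply: eq_bigr => t _; rewrite eq_sym. Qed.

Section Glauber.
Variables (R : realType) (m n : nat) (p : 'I_m -> R) (k : 'M[R]_m)
  (beta : R) (blk : 'I_n -> 'I_m).

Local Notation P := (glauberP k blk beta).
Local Notation Pt := (glauberPt k blk beta).

Definition aa (s : config n) v := (1 + tanhR (beta * locfield k blk s v)) / 2.

Lemma P_sumF (F : config n -> R) s :
  \sum_(tau : config n) P s tau * F tau =
  n%:R^-1 * \sum_(v < n) (aa s v * F (upd s v true) + (1 - aa s v) * F (upd s v false)).
Proof.
rewrite /glauberP.
under eq_bigr do rewrite -mulrA mulr_suml.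
rewrite -mulr_sumr exchange_big /=; congr (_ * _).
apply: eq_bigr => v _.
under eq_bigr do rewrite mulrDl.
rewrite big_split /=.
under eq_bigr do rewrite -mulrA.
rewrite sum_delta.
under [X in _ + X = _]eq_bigr do rewrite -mulrA.
rewrite sum_delta /aa; congr (_ + _); congr (_ * _); lra.
Qed.

Lemma PtS t s tau : Pt t.+1 s tau = \sum_(rho : config n) Pt t s rho * P rho tau.
Proof. by []. Qed.

Lemma Pt_first t : forall s tau,
  Pt t.+1 s tau = \sum_(rho : config n) P s rho * Pt t rho tau.
Proof.
elim: t => [|t IH] s tau.
  rewrite PtS /= sum_delta'.
  under [RHS]eq_bigr do rewrite mulrC.
  by rewrite sum_delta.
rewrite PtS.
under eq_bigr do rewrite IH mulr_suml.
rewrite exchange_big /=; apply: eq_bigr => mu _.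
by rewrite mulr_sumr; apply: eq_bigr => rho _; rewrite mulrA.
Qed.

Lemma expMagn_step s t i :
  expMagn k blk beta s t.+1 i = \sum_(rho : config n) P s rho * expMagn k blk beta rho t i.
Proof.
rewrite /expMagn.
under eq_bigr do rewrite Pt_first mulr_suml.
rewrite exchange_big /=; apply: eq_bigr => rho _.
by rewrite mulr_sumr; apply: eq_bigr => tau _; rewrite mulrA.
Qed.

Lemma magn_upd s v b j :
  magn (R:=R) blk (upd s v b) j = magn (R:=R) blk s j + n%:R^-1 * ((blk v == j)%:R * (spin b - spin (s v))).
Proof.
rewrite /magn -mulrDr; congr (_ * _).
have E w : w != v -> upd s v b w = s w by rewrite /upd ffunE => /negbTE ->.
case: (boolP (blk v == j)) => hv.
  rewrite (bigD1 v) //= [in RHS](bigD1 v) //= /upd ffunE eqxx mul1r.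
  have -> : \sum_(i < n | (blk i == j) && (i != v))
     spin ([ffun w => if w == v then b else s w] i) =
     \sum_(i < n | (blk i == j) && (i != v)) spin (R:=R) (s i).
    by apply: eq_bigr => w /andP [_ wv]; rewrite ffunE (negbTE wv).
  lra.
rewrite mul0r addr0; apply: eq_bigr => w hw.
rewrite E //; apply/eqP => wv; move: hv; by rewrite -wv hw.
Qed.


Definition cle (s' s : config n) := forall v, s' v -> s v.

Lemma spin_le (b' b : bool) : (b' -> b) -> spin (R:=R) b' <= spin b.
Proof. by case: b'; case: b => //= h; [have := h isT | lra]. Qed.

Lemma cle_upd s' s v (b' b : bool) : cle s' s -> (b' -> b) -> cle (upd s' v b') (upd s v b).
Proof. by move=> h hb w; rewrite !ffunE; case: (w == v) => //; apply: h. Qed.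

Hypotheses (hp : forall i, 0 < p i) (hk : forall i j, 0 < k i j) (hb : 0 <= beta)
  (hn : (0 < n)%N) (hcard : forall i, (#|[set v | blk v == i]|)%:R = n%:R * p i).

Lemma loc_diff s' s v : cle s' s ->
  0 <= locfield k blk s v - locfield k blk s' v <=
    \sum_l k (blk v) l * (magn (R:=R) blk s l - magn (R:=R) blk s' l).
Proof.
move=> hs; rewrite /locfield -sumrB.
have K0 w : 0 <= Kint k blk v w * spin (s w) - Kint k blk v w * spin (s' w).
  rewrite -mulrBr mulr_ge0 //; last by rewrite subr_ge0; apply: spin_le; apply: hs.
  by rewrite /Kint divr_ge0 // ltW.
apply/andP; split; first by apply: sumr_ge0 => w _.
apply: (@le_trans _ _ (\sum_w (Kint k blk v w * spin (s w) - Kint k blk v w * spin (s' w)))).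
  by rewrite [X in _ <= X](bigD1 v) //= lerDr.
rewrite (partition_big blk predT) //=; apply: ler_sum => l _.
rewrite /magn -mulrBr -sumrB mulr_sumr mulr_sumr; apply: ler_sum => w /eqP hw.
by rewrite /Kint hw -mulrBr mulrA mulrC mulrA [_ * k _ _]mulrC.
Qed.

Lemma aa_bounds s' s v : cle s' s -> 0 <= aa s' v /\ aa s' v <= aa s v /\ aa s v <= 1.
Proof.
move=> hs; have /andP [h1 h2] := loc_diff v hs.
have hm : tanhR (beta * locfield k blk s' v) <= tanhR (beta * locfield k blk s v).
  by apply: tanh_mono; apply: ler_wpM2l => //; lra.
have := tanh_bounds (beta * locfield k blk s' v).
have := tanh_bounds (beta * locfield k blk s v).
rewrite /aa => /andP [a1 a2] /andP [b1 b2]; split; [|split]; lra.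
Qed.

Lemma couple (F H : config n -> R) :
  (forall r' r, cle r' r -> 0 <= F r - F r' <= H r - H r') ->
  forall s' s, cle s' s ->
  0 <= \sum_tau P s tau * F tau - \sum_tau P s' tau * F tau <=
       \sum_tau P s tau * H tau - \sum_tau P s' tau * H tau.
Proof.
move=> hFH s' s hs; rewrite !P_sumF -!mulrBr -!sumrB.
have n0 : 0 <= n%:R^-1 :> R by rewrite invr_ge0.
have pv v : 0 <= (aa s v * F (upd s v true) + (1 - aa s v) * F (upd s v false) -
     (aa s' v * F (upd s' v true) + (1 - aa s' v) * F (upd s' v false))) <=
     (aa s v * H (upd s v true) + (1 - aa s v) * H (upd s v false) -
     (aa s' v * H (upd s' v true) + (1 - aa s' v) * H (upd s' v false))).
  have [a1 [a2 a3]] := aa_bounds v hs.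
  have /andP [c1 c2] := hFH _ _ (@cle_upd s' s v true true hs id).
  have /andP [d1 d2] := hFH _ _ (@cle_upd s' s v false true hs (fun _ => isT)).
  have /andP [e1 e2] := hFH _ _ (@cle_upd s' s v false false hs id).
  set a := aa s v in a2 a3 *; set a' := aa s' v in a1 a2 *.
  set F1 := F (upd s v true) in c1 c2 d1 d2 *.
  set F2 := F (upd s v false) in e1 e2 *.
  set F1' := F (upd s' v true) in c1 c2 *.
  set F2' := F (upd s' v false) in d1 d2 e1 e2 *.
  set H1 := H (upd s v true) in c2 d2 *.
  set H2 := H (upd s v false) in e2 *.
  set H1' := H (upd s' v true) in c2 *.
  set H2' := H (upd s' v false) in d2 e2 *.
  have E1 : a * F1 + (1 - a) * F2 - (a' * F1' + (1 - a') * F2') =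
    a' * (F1 - F1') + (a - a') * (F1 - F2') + (1 - a) * (F2 - F2') by ring.
  have E2 : a * H1 + (1 - a) * H2 - (a' * H1' + (1 - a') * H2') =
    a' * (H1 - H1') + (a - a') * (H1 - H2') + (1 - a) * (H2 - H2') by ring.
  rewrite E1 E2.
  have g1 : 0 <= a - a' by lra.
  have g2 : 0 <= 1 - a by lra.
  apply/andP; split.
    by rewrite !addr_ge0 // mulr_ge0.
  by rewrite !lerD // ler_wpM2l.
apply/andP; split.
  by rewrite mulr_ge0 // sumr_ge0 // => v _; have /andP [] := pv v.
by rewrite ler_wpM2l // ler_sum // => v _; have /andP [] := pv v.
Qed.


Lemma n_neq0 : n%:R != 0 :> R.
Proof. by rewrite pnatr_eq0 -lt0n. Qed.

Lemma sum_ind (b : 'I_n -> bool) (G : 'I_n -> R) :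
  \sum_v (b v)%:R * G v = \sum_(v | b v) G v.
Proof.
rewrite [RHS]big_mkcond /=; apply: eq_bigr => v _.
by case: (b v); rewrite ?mul1r ?mul0r.
Qed.

Lemma Pmagn s j :
  \sum_tau P s tau * magn (R:=R) blk tau j =
  magn (R:=R) blk s j - n%:R^-1 * magn (R:=R) blk s j +
  n%:R^-1 * n%:R^-1 * \sum_v (blk v == j)%:R * tanhR (beta * locfield k blk s v).
Proof.
rewrite P_sumF.
have pv v : aa s v * magn (R:=R) blk (upd s v true) j +
    (1 - aa s v) * magn (R:=R) blk (upd s v false) j =
    magn (R:=R) blk s j + n%:R^-1 * ((blk v == j)%:R * tanhR (beta * locfield k blk s v))
     - n%:R^-1 * ((blk v == j)%:R * spin (s v)).
  by rewrite !magn_upd /aa /=; field; rewrite n_neq0.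
under eq_bigr do rewrite pv.
rewrite sumrB big_split /= sumr_const card_ord -!mulr_sumr.
have -> : \sum_v (blk v == j)%:R * spin (R:=R) (s v) = n%:R * magn (R:=R) blk s j.
  by rewrite sum_ind /magn mulrA divff ?n_neq0 // mul1r.
rewrite -[magn blk s j *+ n]mulr_natr.
by field; rewrite n_neq0.
Qed.

Lemma card_blk j : \sum_v (blk v == j)%:R = n%:R * p j :> R.
Proof.
rewrite -hcard.
have := sum_ind (fun v => blk v == j) (fun _ => 1).
under eq_bigr do rewrite mulr1.
move=> ->; rewrite sumr_const; congr (_ *+ _).
by rewrite cardsE.
Qed.

Definition dcol (s s' : config n) : 'M[R]_(m, 1) :=
  \col_j (magn (R:=R) blk s j - magn (R:=R) blk s' j).

Lemma Pmagn_diff s' s j : cle s' s ->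
  \sum_tau P s tau * magn (R:=R) blk tau j - \sum_tau P s' tau * magn (R:=R) blk tau j
  <= (Qn n p k beta *m dcol s s') j 0.
Proof.
move=> hs; rewrite !Pmagn mxE.
under [X in _ <= X]eq_bigr do rewrite /Qn /dcol !mxE mulrDl.
rewrite [X in _ <= X]big_split /=.
under [X in _ <= X + _]eq_bigr do rewrite -mulrA.
rewrite sum_delta'.
set M := magn blk s j; set M' := magn blk s' j.
set S := \sum_(i < m) beta / n%:R * (p j * k j i) * (magn (R:=R) blk s i - magn (R:=R) blk s' i).
have HS : n%:R^-1 * n%:R^-1 * (\sum_v (blk v == j)%:R * tanhR (beta * locfield k blk s v))
  - n%:R^-1 * n%:R^-1 * (\sum_v (blk v == j)%:R * tanhR (beta * locfield k blk s' v))
  <= S.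
  rewrite -mulrBr -sumrB.
  have n0 : 0 <= n%:R^-1 * n%:R^-1 :> R by rewrite mulr_ge0 // invr_ge0.
  set T := \sum_l k j l * (magn (R:=R) blk s l - magn (R:=R) blk s' l).
  apply: (@le_trans _ _ (n%:R^-1 * n%:R^-1 * \sum_v (blk v == j)%:R * (beta * T))).
    apply: ler_wpM2l => //; apply: ler_sum => v _.
    rewrite -mulrBr; case: eqP => hv; rewrite ?mul0r ?mul1r //.
    have /andP [h1 h2] := loc_diff v hs.
    rewrite hv in h2.
    apply: (le_trans (tanh_lip _)).
      by apply: ler_wpM2l => //; lra.
    by rewrite -mulrBr; apply: ler_wpM2l.
  have -> : S = beta / n%:R * p j * T.
    by rewrite /S /T mulr_sumr; apply: eq_bigr => l _; ring.
  rewrite -mulr_suml card_blk le_eqVlt; apply/orP; left; apply/eqP; field; by rewrite n_neq0.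
have -> : (1 - n%:R^-1) * (M - M') = (M - n%:R^-1 * M) - (M' - n%:R^-1 * M') by ring.
lra.
Qed.

Lemma mxpow_comm (A : 'M[R]_m) t : A *m mxpow A t = mxpow A t *m A.
Proof.
elim: t => [|t IH] /=; first by rewrite mulmx1 mul1mx.
by rewrite -/(mxpow A t) -mulmxA -IH.
Qed.

Lemma Qn_ge0 i j : 0 <= Qn n p k beta i j.
Proof.
rewrite mxE addr_ge0 //.
  rewrite mulr_ge0 // subr_ge0 invf_le1 ?ltr0n //.
  by rewrite ler1n.
by rewrite mulr_ge0 ?divr_ge0 // mulr_ge0 // ltW.
Qed.

Lemma mxpow_ge0 t i j : 0 <= mxpow (Qn n p k beta) t i j.
Proof.
elim: t i j => [|t IH] i j /=; first by rewrite mxE.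
by rewrite mxE sumr_ge0 // => l _; rewrite mulr_ge0 // Qn_ge0.
Qed.

Lemma cle_magn s' s : cle s' s -> forall j, magn (R:=R) blk s' j <= magn (R:=R) blk s j.
Proof.
move=> hs j; rewrite /magn ler_wpM2l ?invr_ge0 // ler_sum // => v _.
by apply: spin_le; apply: hs.
Qed.

Lemma mainP t : forall s' s, cle s' s -> forall i,
  0 <= expMagn k blk beta s t i - expMagn k blk beta s' t i <=
  (mxpow (Qn n p k beta) t *m dcol s s') i 0.
Proof.
elim: t => [|t IH] s' s hs i.
  have E r : expMagn k blk beta r 0 i = magn blk r i.
    by rewrite /expMagn /=; rewrite sum_delta'.
  rewrite !E /= mul1mx mxE subr_ge0 cle_magn //=.
pose H r := \sum_j mxpow (Qn n p k beta) t i j * magn (R:=R) blk r j.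
have hFH : forall r' r, cle r' r ->
    0 <= expMagn k blk beta r t i - expMagn k blk beta r' t i <= H r - H r'.
  move=> r' r hr; have /andP [h1 h2] := IH _ _ hr i.
  apply/andP; split => //; apply: (le_trans h2).
  rewrite mxE /H -sumrB le_eqVlt; apply/orP; left; apply/eqP.
  by apply: eq_bigr => j _; rewrite /dcol mxE mulrBr.
have /andP [c1 c2] := couple hFH hs.
rewrite !expMagn_step c1 /=.
apply: (le_trans c2).
rewrite /H.
under eq_bigr do rewrite mulr_sumr.
rewrite exchange_big /=.
under [X in _ - X <= _]eq_bigr do rewrite mulr_sumr.
rewrite [X in _ - X <= _]exchange_big /= -sumrB.
rewrite mxpow_comm -mulmxA mxE.
apply: ler_sum => j _.
under eq_bigr do rewrite mulrCA.
under [X in _ - X <= _]eq_bigr do rewrite mulrCA.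
rewrite -!mulr_sumr -mulrBr.
apply: ler_wpM2l; first exact: mxpow_ge0.
exact: Pmagn_diff.
Qed.


Definition cp (pi : {perm 'I_n}) (s : config n) : config n := [ffun v => s (pi v)].

Lemma cp_inj pi : injective (cp pi).
Proof.
move=> s1 s2 /ffunP h; apply/ffunP => u.
by have := h (pi^-1 u)%g; rewrite !ffunE permKV.
Qed.

Section Perm.
Variables (pi : {perm 'I_n}) (hpi : forall v, blk (pi v) = blk v).

Lemma magn_cp s j : magn (R:=R) blk (cp pi s) j = magn (R:=R) blk s j.
Proof.
rewrite /magn; congr (_ * _).
rewrite [RHS](reindex_inj (@perm_inj _ pi)) /=.
by apply: eq_big => v; [rewrite hpi | rewrite ffunE].
Qed.

Lemma loc_cp s v : locfield k blk (cp pi s) v = locfield k blk s (pi v).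
Proof.
rewrite /locfield [RHS](reindex_inj (@perm_inj _ pi)) /=.
apply: eq_big => w; first by rewrite (inj_eq (@perm_inj _ pi)).
by move=> _; rewrite ffunE /Kint !hpi.
Qed.

Lemma upd_cp s v b : upd (cp pi s) v b = cp pi (upd s (pi v) b).
Proof. by apply/ffunP => w; rewrite !ffunE (inj_eq (@perm_inj _ pi)). Qed.

Lemma P_cp s tau : P (cp pi s) (cp pi tau) = P s tau.
Proof.
rewrite /glauberP; congr (_ * _).
rewrite [RHS](reindex_inj (@perm_inj _ pi)) /=; apply: eq_bigr => v _.
by rewrite !upd_cp !(inj_eq (@cp_inj pi)) loc_cp.
Qed.

Lemma Pt_cp t s tau : Pt t (cp pi s) (cp pi tau) = Pt t s tau.
Proof.
elim: t s tau => [|t IH] s tau; first by rewrite /= (inj_eq (@cp_inj pi)).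
rewrite !PtS [LHS](reindex_inj (@cp_inj pi)) /=; apply: eq_bigr => rho _.
by rewrite IH P_cp.
Qed.

Lemma expMagn_cp s t i : expMagn k blk beta (cp pi s) t i = expMagn k blk beta s t i.
Proof.
rewrite /expMagn [LHS](reindex_inj (@cp_inj pi)) /=; apply: eq_bigr => tau _.
by rewrite Pt_cp magn_cp.
Qed.
End Perm.

Lemma reduce (s : config n) N : forall s' : config n,
  (#|[set v | s' v && ~~ s v]| <= N)%N ->
  (forall j, magn (R:=R) blk s' j <= magn (R:=R) blk s j) ->
  exists s'', cle s'' s /\ (forall j, magn (R:=R) blk s'' j = magn (R:=R) blk s' j) /\ (forall t i, expMagn k blk beta s'' t i = expMagn k blk beta s' t i).
Proof.
elim: N => [|N IH] s' hN hm.
  exists s'; split => // v sv; apply/negPn/negP => nsv.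
  move: hN; rewrite leqn0 cards_eq0 => /eqP E.
  have : v \in [set v | s' v && ~~ s v] by rewrite inE sv nsv.
  by rewrite E inE.
case: (boolP [exists v, s' v && ~~ s v]); last first.
  move=> /existsPn hno; exists s'; split => // v sv.
  by have := hno v; rewrite sv /= negbK.
move=> /existsP [v /andP [sv nsv]].
case: (boolP [exists w, [&& blk w == blk v, s w & ~~ s' w]]); last first.
  move=> /existsPn hno; exfalso.
  have := hm (blk v); apply/negP; rewrite -ltNge.
  rewrite /magn ltr_pM2l ?invr_gt0 ?ltr0n //.
  rewrite (bigD1 v) //= [X in _ < X](bigD1 v) //= sv (negbTE nsv) /=.
  apply: ltr_leD; first by lra.
  apply: ler_sum => w /andP [hw _]; apply: spin_le => sw.
  by have := hno w; rewrite hw sw /= negbK.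
move=> /existsP [w /and3P [hw sw nsw]].
pose pi := tperm v w.
have hpi : forall u, blk (pi u) = blk u.
  by move=> u; rewrite /pi; case: tpermP => [->|->|]; rewrite // (eqP hw).
pose s1 := cp pi s'.
have hprop : [set u | s1 u && ~~ s u] \proper [set u | s' u && ~~ s u].
  apply/properP; split.
    apply/fintype.subsetP => u; rewrite !inE /s1 ffunE /pi.
    case: tpermP => [->|->|_ _] //.
      by rewrite (negbTE nsw).
    by rewrite sw andbF.
  exists v; first by rewrite inE sv nsv.
  by rewrite inE /s1 ffunE /pi tpermL (negbTE nsw).
have hN1 : (#|[set u | s1 u && ~~ s u]| <= N)%N.
  by rewrite -ltnS; apply: leq_trans (proper_card hprop) hN.
have hm1 : forall j, magn (R:=R) blk s1 j <= magn (R:=R) blk s j.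
  by move=> j; rewrite /s1 magn_cp.
have [s'' [h1 [h2 h3]]] := IH s1 hN1 hm1.
exists s''; split => //; split.
  by move=> j; rewrite h2 /s1 magn_cp.
by move=> t i; rewrite h3 /s1 expMagn_cp.
Qed.

End Glauber.

Theorem lemma4p8 (R : realType) (m : nat) (p : 'I_m -> R) (k : 'M[R]_m)
  (beta : R) (n : nat) (blk : 'I_n -> 'I_m) :
  (0 < m)%N ->
  (forall i, 0 < p i) -> \sum_(i < m) p i = 1 ->
  (forall i j, k i j = k j i) -> (forall i j, 0 < k i j) ->
  0 <= beta ->
  (0 < n)%N ->
  (forall i, (#|[set v | blk v == i]|)%:R = n%:R * p i) ->
  forall sigma sigma' : config n,
  (forall i, magn (R:=R) blk sigma' i <= magn (R:=R) blk sigma i) ->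
  forall (t : nat) (i : 'I_m),
    0 <= expMagn k blk beta sigma t i - expMagn k blk beta sigma' t i /\
    expMagn k blk beta sigma t i - expMagn k blk beta sigma' t i <=
      (mxpow (Qn n p k beta) t *m \col_j (magn (R:=R) blk sigma j - magn (R:=R) blk sigma' j)) i 0.
Proof.
move=> hm0 hp hsum hsym hk hb hn hcard sigma sigma' hmag t i.
have [s'' [h1 [h2 h3]]] :=
  @reduce R m n k beta blk hn sigma #|[set v | sigma' v && ~~ sigma v]| sigma' (leqnn _) hmag.
have := @mainP R m n p k beta blk hp hk hb hn hcard t s'' sigma h1 i.
rewrite !h3.
have -> : dcol R blk sigma s'' = \col_j (magn (R:=R) blk sigma j - magn (R:=R) blk sigma' j).
  by apply/matrixP => a b; rewrite !mxE h2.
by move/andP.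
Qed.
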